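(* Let $\sigma\in\mathcal{S}_n(132)$, and let $s$ be the number of elements $(i,j)\in\mathcal{E}(\sigma)$ satisfying $i+j<n$. Then the number of Schröder permutations $\pi\in\mathcal{S}_n$ with $\phi(\pi)=\sigma$ equals $2^s$.
   Context: $\mathcal{S}_n(T)$ is the set of permutations of $\{1,\dots,n\}$ avoiding every pattern in $T$ (a permutation avoids $\tau\in\mathcal{S}_k$ if no subsequence of length $k$ is in the same relative order as $\tau$). A Schröder permutation is one avoiding both $1243$ and $2143$. Represent $\pi\in\mathcal{S}_n$ by an $n\times n$ array, rows $i$ numbered top to bottom, columns $j$ left to right, with a dot in square $(i,\pi_i)$. The diagram $D(\pi)$ is the set of squares $(i,j)$ with $\pi_i>j$ and $\pi^{-1}(j)>i$. The essential set $\mathcal{E}(\pi)$ is the set of $(i,j)\in D(\pi)$ with $(i+1,j)\notin D(\pi)$ and $(i,j+1)\notin D(\pi)$ (squares outside the array count as not in $D(\pi)$). The rank of $(i,j)$ with respect to $\pi$ is $\rho_\pi(i,j)=\#\{k<i:\pi_k<j\}$; $\mathcal{E}_r(\pi)$ is the set of elements of $\mathcal{E}(\pi)$ of rank $r$. A permutation is uniquely determined by its essential set together with the ranks of its elements (Fulton). For a Schröder permutation $\pi\in\mathcal{S}_n$, let $\mathcal{E}^*(\pi)$ be obtained from $\mathcal{E}(\pi)$ by replacing each $(i,j)\in\mathcal{E}_1(\pi)$ by $(i-1,j-1)$; there is a unique $\sigma\in\mathcal{S}_n$ with $\mathcal{E}(\sigma)=\mathcal{E}^*(\pi)$ and all elements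 of $\mathcal{E}(\sigma)$ of rank $0$ (with respect to $\sigma$), and one sets $\phi(\pi)=\sigma$; this $\sigma$ avoids $132$. *)

(* Defs.v *)
(* Permutations of {1..n} are modelled as {perm 'I_n}
   (0-based: row/column/value k here corresponds to k+1 in the paper). *)
From mathcomp Require Import all_boot all_fingroup.
Set Implicit Arguments. Unset Strict Implicit. Unset Printing Implicit Defensive.

Section Defs.
Variable n : nat.
Implicit Types (p : {perm 'I_n}).

(* p contains the pattern t (t is a permutation of 0..k-1 given as a list):
   there is a strictly increasing choice of k positions whose values are
   in the same relative order as t. *)
Definition contains p (t : seq nat) : bool :=
  [exists f : {ffun 'I_(size t) -> 'I_n},
    [forall a : 'I_(size t), forall b : 'I_(size t),
       (a < b) ==> (f a < f b)] &&
    [forall a : 'I_(size t), forall b : 'I_(size t),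
       (p (f a) < p (f b)) == (nth 0 t a < nth 0 t b)]].

Definition avoids p (t : seq nat) : bool := ~~ contains p t.

Definition schroder p : bool :=
  avoids p [:: 0; 1; 3; 2] && avoids p [:: 1; 0; 3; 2].

(* Square (i,j) (row i, column j) is in the diagram D(p):
   p_i > j and p^{-1}(j) > i; squares outside the array are not in D(p). *)
Definition inD p (i j : nat) : bool :=
  [exists a : 'I_n, exists b : 'I_n,
     [&& val a == i, val b == j, b < p a & a < (p^-1)%g b]].

Definition ess p (i j : nat) : bool :=
  [&& inD p i j, ~~ inD p i.+1 j & ~~ inD p i j.+1].

Definition rank p (i j : nat) : nat :=
  #|[set k : 'I_n | (k < i) && (p k < j)]|.

Definition ess_star p (i j : nat) : bool :=
  (ess p i j && (rank p i j != 1)) || (ess p i.+1 j.+1 && (rank p i.+1 j.+1 == 1)).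

(* phi(p) = s : E(s) = E*(p) and every element of E(s) has rank 0 w.r.t. s.
   (The paper shows such s exists and is unique for Schröder p.) *)
Definition phi_rel p (s : {perm 'I_n}) : Prop :=
  (forall i j : nat, ess s i j = ess_star p i j) /\
  (forall i j : nat, ess s i j -> rank s i j = 0).

End Defs.

(* Main.v *)
Require Import Defs.
From mathcomp Require Import all_boot all_fingroup zify.
Set Implicit Arguments. Unset Strict Implicit. Unset Printing Implicit Defensive.

Section Basic.
Variable n : nat.
Implicit Types (p q : {perm 'I_n}).

Definition pv p (k : nat) : nat :=
  if (insub k : option 'I_n) is Some o then val (p o) else k.

Lemma pvE p (o : 'I_n) : pv p o = p o.
Proof. by rewrite /pv valK. Qed.

Lemma pvS p k (H : k < n) : pv p k = p (Sub k H).
Proof. by rewrite -[in LHS](_ : val (Sub k H : 'I_n) = k) // pvE. Qed.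

Lemma pv_lt p k : k < n -> pv p k < n.
Proof. by move=> H; rewrite (pvS p H). Qed.

Lemma pvK p k : k < n -> pv p^-1 (pv p k) = k.
Proof. by move=> H; rewrite (pvS p H) pvE permK. Qed.

Lemma pvKV p v : v < n -> pv p (pv p^-1 v) = v.
Proof.
move=> H; have := pvK p^-1 H; by rewrite invgK.
Qed.

Lemma pv_inj p k1 k2 : k1 < n -> k2 < n -> pv p k1 = pv p k2 -> k1 = k2.
Proof. by move=> H1 H2 E; rewrite -(pvK p H1) E pvK. Qed.

Lemma inDE p i j : inD p i j = [&& i < n, j < n, j < pv p i & i < pv p^-1 j].
Proof.
apply/existsP/idP.
  case=> a /existsP [b /and4P [/eqP Ea /eqP Eb H1 H2]].
  by rewrite -Ea -Eb !pvE ltn_ord ltn_ord H1 H2.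
case/and4P=> Hi Hj H1 H2; exists (Sub i Hi); apply/existsP; exists (Sub j Hj).
by rewrite /= !eqxx -!pvE /= H1 H2.
Qed.

Lemma rankE p i j : i <= n ->
  rank p i j = count (fun k => pv p k < j) (iota 0 i).
Proof.
move=> Hi; rewrite /rank cardsE cardE /enum_mem size_filter -enumT.
rewrite (eq_count (a2 := (fun k => (k < i) && (pv p k < j)) \o val)); last first.
  by move=> k /=; rewrite pvE.
rewrite -count_map val_enum_ord -(subnKC Hi) iotaD count_cat add0n.
rewrite (@eq_in_count _ _ pred0 (iota i (n - i))); last first.
  by move=> k; rewrite mem_iota => /andP [H _]; apply/negbTE; rewrite /= negb_and -leqNgt H.
rewrite count_pred0 addn0; apply: eq_in_count => k.
by rewrite mem_iota /= => ->.
Qed.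


Lemma count_iotaS (P : pred nat) i :
  count P (iota 0 i.+1) = count P (iota 0 i) + P i.
Proof. by rewrite -addn1 iotaD count_cat /= addn0. Qed.

Lemma count2 (P : pred nat) i : 1 < count P (iota 0 i) ->
  exists k1 k2, [/\ k1 < k2, k2 < i, P k1 & P k2].
Proof.
elim: i => [|i IH] //; rewrite count_iotaS.
case: (ltnP 1 (count P (iota 0 i))) => H.
  by case: (IH H) => k1 [k2 [H1 H2 H3 H4]]; exists k1, k2; split => //; lia.
case Pi: (P i) => /= Hc; last by lia.
have : 0 < count P (iota 0 i) by lia.
rewrite -has_count => /hasP [k1]; rewrite mem_iota => /andP [_ Hk1] Pk1.
by exists k1, i; split.
Qed.

Lemma count_ge2 (P : pred nat) i k1 k2 : k1 < k2 < i -> P k1 -> P k2 ->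
  1 < count P (iota 0 i).
Proof.
move=> /andP [H1 H2] P1 P2.
rewrite -(subnKC (ltnW H2)) iotaD count_cat.
have A : 0 < count P (iota 0 k2).
  by rewrite -has_count; apply/hasP; exists k1 => //; rewrite mem_iota.
have B : 0 < count P (iota (0 + k2) (i - k2)).
  by rewrite -has_count; apply/hasP; exists k2 => //; rewrite mem_iota; lia.
lia.
Qed.

Lemma containsE p (t : seq nat) : contains p t ->
  exists g : nat -> nat, (forall a b, a < b < size t -> g a < g b) /\
    (forall a, a < size t -> g a < n) /\
    (forall a b, a < size t -> b < size t ->
        (pv p (g a) < pv p (g b)) = (nth 0 t a < nth 0 t b)).
Proof.
case: t => [|x t]. 
  move=> _; exists id; split; [by move=> a b /andP [_]|split => //].
move=> /existsP [f /andP [/forallP Hinc /forallP Hval]].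
pose o (k : nat) : 'I_(size t).+1 := inord k.
have ov k : k < (size t).+1 -> nat_of_ord (o k) = k by move=> Hk; rewrite /o inordK.
exists (fun k => nat_of_ord (f (o k))); split; last split.
- move=> a b /andP [Hab Hb]; have := forallP (Hinc (o a)) (o b).
  have Hb' : b < (size t).+1 by [].
  have Ha' : a < (size t).+1 by lia.
  by rewrite !ov // => /implyP; apply.
- by move=> a _; exact: ltn_ord.
- move=> a b Ha Hb; have := forallP (Hval (o a)) (o b).
  by rewrite !pvE !ov // => /eqP.
Qed.

Lemma contains4E p t : (t = [::0;1;3;2] \/ t = [::1;0;3;2]) -> contains p t ->
  exists i1 i2 i3 i4, [/\ i1 < i2, i2 < i3, i3 < i4, i4 < n &
     [/\ pv p i1 < pv p i4, pv p i2 < pv p i4 & pv p i4 < pv p i3]].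
Proof.
move=> Ht /containsE [g [Hi [Hn Hv]]].
have s4 : size t = 4 by case: Ht => ->.
rewrite s4 in Hi Hn Hv.
exists (g 0), (g 1), (g 2), (g 3); split; try (apply: Hi; done); first exact: Hn.
by split; rewrite Hv //; case: Ht => ->.
Qed.

Lemma contains3E p : contains p [::0;2;1] ->
  exists i1 i2 i3, [/\ i1 < i2, i2 < i3, i3 < n &
     pv p i1 < pv p i3 < pv p i2].
Proof.
move=> /containsE [g [Hi [Hn Hv]]].
exists (g 0), (g 1), (g 2); split; try (apply: Hi; done); first exact: Hn.
by rewrite !Hv.
Qed.

Lemma containsI p (t : seq nat) (g : nat -> nat) :
  (forall a b, a < b < size t -> g a < g b) ->
  (forall a, a < size t -> g a < n) ->
  (forall a b, a < size t -> b < size t ->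
        (pv p (g a) < pv p (g b)) = (nth 0 t a < nth 0 t b)) ->
  0 < n -> contains p t.
Proof.
move=> Hi Hn Hv H0; pose o0 : 'I_n := Ordinal H0.
pose f := [ffun a : 'I_(size t) => insubd o0 (g a)].
have fv (a : 'I_(size t)) : nat_of_ord (f a) = g a.
  by rewrite ffunE val_insubd Hn.
apply/existsP; exists f; apply/andP; split; apply/forallP => a; apply/forallP => b.
  by apply/implyP => Hab; rewrite !fv; apply: Hi; rewrite Hab ltn_ord.
by rewrite -!pvE !fv Hv.
Qed.

Lemma contains4I p i1 i2 i3 i4 : i1 < i2 -> i2 < i3 -> i3 < i4 -> i4 < n ->
  pv p i1 < pv p i4 -> pv p i2 < pv p i4 -> pv p i4 < pv p i3 ->
  contains p [::0;1;3;2] || contains p [::1;0;3;2].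
Proof.
move=> H1 H2 H3 H4 V1 V2 V3.
have Hg : forall a b, a < b < 4 -> nth 0 [:: i1; i2; i3; i4] a < nth 0 [:: i1; i2; i3; i4] b.
  move=> a b /andP [Hab Hb].
  case: a Hab => [|[|[|[|a]]]] Hab //; case: b Hb Hab => [|[|[|[|b]]]] Hb Hab //=; lia.
have Hn : forall a, a < 4 -> nth 0 [:: i1; i2; i3; i4] a < n.
  by case=> [|[|[|[|a]]]] Ha //=; lia.
have Hp : pv p i1 != pv p i2.
  apply/eqP => E; have : i1 = i2.
    move: E; rewrite /pv.
    case: insubP => [o1 _ E1|]; last lia.
    case: insubP => [o2 _ E2|]; last lia.
    by move=> /val_inj /perm_inj E; rewrite -E1 -E2 E.
  lia.
case: (ltngtP (pv p i1) (pv p i2)) Hp => // L _; apply/orP; [left|right];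
apply: (@containsI p _ (nth 0 [:: i1; i2; i3; i4])) => //; try lia;
move=> a b Ha Hb; case: a Ha => [|[|[|[|a]]]] Ha //; case: b Hb => [|[|[|[|b]]]] Hb //=;
  apply/idP/idP; lia.
Qed.

Lemma contains3I p i1 i2 i3 : i1 < i2 -> i2 < i3 -> i3 < n ->
  pv p i1 < pv p i3 -> pv p i3 < pv p i2 -> contains p [::0;2;1].
Proof.
move=> H1 H2 H3 V1 V2.
apply: (@containsI _ _ (nth 0 [:: i1; i2; i3])); last lia.
- move=> a b /andP [Hab Hb].
  case: a Hab => [|[|[|a]]] Hab //; case: b Hb Hab => [|[|[|b]]] Hb Hab //=; lia.
- by case=> [|[|[|a]]] Ha //=; lia.
- move=> a b Ha Hb; case: a Ha => [|[|[|a]]] Ha //; case: b Hb => [|[|[|b]]] Hb //=;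
  apply/idP/idP; lia.
Qed.


Lemma schroderP p : schroder p <-> (forall i j, inD p i j -> rank p i j <= 1).
Proof.
split.
  move=> /andP [A1 A2] i j HD; rewrite leqNgt; apply/negP => Hr.
  move: (HD); rewrite inDE => /and4P [Hi Hj H1 H2].
  move: Hr; rewrite rankE ?(ltnW Hi) // => /count2 [k1 [k2 [K1 K2 P1 P2]]].
  have Hl := pv_lt p^-1 Hj.
  have := contains4I (p:=p) K1 K2 H2 Hl; rewrite pvKV // => /(_ P1 P2 H1).
  by rewrite (negbTE A1) (negbTE A2).
move=> H; apply/andP; split; apply/negP => C;
  [have := contains4E (or_introl erefl) C | have := contains4E (or_intror erefl) C];
  case=> i1 [i2 [i3 [i4 [H1 H2 H3 H4 [V1 V2 V3]]]]];
  (have HD : inD p i3 (pv p i4) by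
     rewrite inDE pv_lt ?pvK ?H3 ?V3 //; lia);
  have := H _ _ HD; rewrite rankE; try lia;
  rewrite leqNgt => /negP; apply; apply: (@count_ge2 _ _ i1 i2) => //; lia.
Qed.

Lemma dominant0 p : avoids p [::0;2;1] -> forall i j, inD p i j -> rank p i j = 0.
Proof.
move=> A i j HD; move: (HD); rewrite inDE => /and4P [Hi Hj H1 H2].
rewrite rankE ?(ltnW Hi) //; apply/eqP; rewrite -leqn0 leqNgt -has_count.
apply/negP => /hasP [k]; rewrite mem_iota => /andP [_ Hk] Pk.
have Hl := pv_lt p^-1 Hj.
have := contains3I (p:=p) Hk H2 Hl; rewrite pvKV // => /(_ Pk H1).
by rewrite (negbTE A).
Qed.


Definition RR p i j := count (fun k => pv p k <= j) (iota 0 i.+1).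

Lemma RR_row p i j : RR p i.+1 j = RR p i j + (pv p i.+1 <= j).
Proof. by rewrite /RR count_iotaS. Qed.

Lemma RR0 p j : RR p 0 j = (pv p 0 <= j).
Proof. by rewrite /RR /= addn0. Qed.

Lemma count_pv_eq p v m : v < n -> m <= n ->
  count (fun k => pv p k == v) (iota 0 m) = (pv p^-1 v < m).
Proof.
move=> Hv Hm; rewrite (@eq_in_count _ _ (pred1 (pv p^-1 v))); last first.
  move=> k; rewrite mem_iota /= => Hk; apply/eqP/eqP => [<-|->].
    by rewrite pvK //; lia.
  by rewrite pvKV.
by rewrite count_uniq_mem ?iota_uniq // mem_iota.
Qed.

Lemma count_le_split p j m :
  count (fun k => pv p k <= j.+1) (iota 0 m) =
  count (fun k => pv p k <= j) (iota 0 m) + count (fun k => pv p k == j.+1) (iota 0 m).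
Proof.
elim: m => [|m IH] //; rewrite !count_iotaS IH.
rewrite (leq_eqVlt (pv p m)) ltnS; case E: (pv p m == j.+1) => /=.
  by move/eqP: E => ->; rewrite ltnn /= addn0 addnA.
by rewrite addn0 addnAC.
Qed.

Lemma RR_col p i j : i < n -> j.+1 < n ->
  RR p i j.+1 = RR p i j + (pv p^-1 j.+1 <= i).
Proof. by move=> Hi Hj; rewrite /RR count_le_split count_pv_eq. Qed.

Lemma RR_col0 p i : i < n -> 0 < n -> RR p i 0 = (pv p^-1 0 <= i).
Proof.
move=> Hi Hn; rewrite /RR (_ : (pv p^-1 0 <= i) = (pv p^-1 0 < i.+1)) // -count_pv_eq //.
by apply: eq_count => k /=; rewrite leqn0.
Qed.

Lemma RR_rank p i j : inD p i j -> RR p i j = rank p i j.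
Proof.
rewrite inDE => /and4P [Hi Hj H1 H2]; rewrite rankE ?(ltnW Hi) // /RR count_iotaS.
rewrite leqNgt H1 addn0; apply: eq_in_count => k; rewrite mem_iota => /andP [_ Hk].
rewrite leq_eqVlt; case E: (pv p k == j) => //=.
by move/eqP: E => E; have := pvK p (ltn_trans Hk Hi); rewrite E; lia.
Qed.

Lemma fulton_le p q : (forall i j, ess p i j -> RR q i j <= RR p i j) ->
  forall i j, i < n -> j < n -> RR q i j <= RR p i j.
Proof.
move=> He.
have D : forall d i j, inD p i j -> (n - i) + (n - j) <= d -> RR q i j <= RR p i j.
  elim=> [|d IH] i j HD Hd.
    by move: HD; rewrite inDE; lia.
  move: (HD); rewrite inDE => /and4P [Hi Hj H1 H2].
  case D1: (inD p i.+1 j).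
    move: (D1); rewrite inDE => /and4P [Hi1 _ H3 _].
    have E : RR p i.+1 j = RR p i j.
      by rewrite RR_row (_ : (pv p i.+1 <= j) = false) ?addn0 //; lia.
    rewrite -E; apply: (leq_trans _ (IH _ _ D1 _)); first by rewrite RR_row leq_addr.
    lia.
  case D2: (inD p i j.+1).
    move: (D2); rewrite inDE => /and4P [_ Hj1 _ H4].
    have E : RR p i j.+1 = RR p i j.
      by rewrite RR_col // (_ : (pv p^-1 j.+1 <= i) = false) ?addn0 //; lia.
    rewrite -E; apply: (leq_trans _ (IH _ _ D2 _)); last by lia.
    by rewrite RR_col // leq_addr.
  by apply: He; rewrite /ess HD D1 D2.
have S : forall s i j, i + j <= s -> i < n -> j < n -> RR q i j <= RR p i j.
  elim=> [|s IH] i j Hs Hi Hj.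
    move: Hs; rewrite leqn0 addn_eq0 => /andP [/eqP Ei /eqP Ej]; subst i j.
    case HD: (inD p 0 0); first by apply: (D _ _ _ HD (leqnn _)).
    move: HD; rewrite inDE Hi /= => /negbT; rewrite negb_and -!leqNgt => /orP [H|H].
      by rewrite !RR0 H leq_b1.
    by rewrite !RR_col0 // H leq_b1.
  case HD: (inD p i j); first by apply: (D _ _ _ HD (leqnn _)).
  move: HD; rewrite inDE Hi Hj /= => /negbT; rewrite negb_and -!leqNgt => /orP [H|H].
    case: i Hi Hs H => [|i] Hi Hs H.
      by rewrite !RR0 H leq_b1.
    rewrite !RR_row H; apply: leq_add; first by apply: IH; lia.
    exact: leq_b1.
  case: j Hj Hs H => [|j] Hj Hs H.
    by rewrite !RR_col0 ?H ?leq_b1 //; lia.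
  rewrite !RR_col ?H //; try lia; apply: leq_add; first by apply: IH; lia.
  exact: leq_b1.
by move=> i j Hi Hj; apply: (S (i + j)).
Qed.

Lemma fulton p q : (forall i j, ess p i j = ess q i j) ->
  (forall i j, ess p i j -> rank p i j = rank q i j) -> p = q.
Proof.
move=> Ee Er.
have Hpq : forall i j, ess p i j -> RR p i j = RR q i j.
  move=> i j H; have Hq : ess q i j by rewrite -Ee.
  rewrite !RR_rank ?Er //; [by case/and3P: Hq | by case/and3P: H].
have L1 := fulton_le (p:=p) (q:=q) (fun i j H => eq_leq (esym (Hpq i j H))).
have L2 := fulton_le (p:=q) (q:=p) (fun i j H => eq_leq (Hpq i j (etrans (Ee i j) H))).
have E : forall i j, i < n -> j < n -> RR p i j = RR q i j.
  by move=> i j Hi Hj; apply/eqP; rewrite eqn_leq L1 ?L2.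
have Ev : forall i j, i < n -> j < n -> (pv p i <= j) = (pv q i <= j).
  case=> [|i] j Hi Hj.
    by have := E 0 j Hi Hj; rewrite !RR0 => /eqP; case: (pv p 0 <= j); case: (pv q 0 <= j).
  have := E i.+1 j Hi Hj; rewrite !RR_row E //; last by lia.
  by move/eqP; rewrite eqn_add2l => /eqP; case: (_ <= _); case: (_ <= _).
apply/permP => o; apply: val_inj; rewrite /= -!pvE.
have := Ev o (pv p o) (ltn_ord o) (pv_lt p (ltn_ord o)).
have := Ev o (pv q o) (ltn_ord o) (pv_lt q (ltn_ord o)).
rewrite !leqnn; lia.
Qed.


Fixpoint lam p i := if i is i'.+1 then minn (lam p i') (pv p i) else pv p 0.

Lemma lamP p i j : j < lam p i <-> (forall k, k <= i -> j < pv p k).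
Proof.
elim: i => [|i IH] /=.
  by split=> [H k|H]; [rewrite leqn0 => /eqP ->|apply: H].
rewrite leq_min; split.
  move=> /andP [/IH H1 H2] k; rewrite leq_eqVlt => /orP [/eqP ->|] //.
  by rewrite ltnS; apply: H1.
by move=> H; rewrite H // andbT; apply/IH => k Hk; apply: H; lia.
Qed.

Lemma lam_le p i k : k <= i -> lam p i <= pv p k.
Proof.
move=> Hk; case E: (lam p i) => [|l] //.
have : l < lam p i by rewrite E.
by move/lamP => /(_ k Hk).
Qed.

Lemma lam_ex p i : exists2 k, k <= i & pv p k = lam p i.
Proof.
elim: i => [|i [k Hk E]] /=; first by exists 0.
case: (leqP (lam p i) (pv p i.+1)) => H.
  by exists k; lia.
by exists i.+1 => //; lia.
Qed.

Lemma lam_mono p i i' : i <= i' -> lam p i' <= lam p i.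
Proof.
move=> H; case: (lam_ex p i) => k Hk <-; apply: lam_le; lia.
Qed.

Lemma lam_lt p i : i < n -> lam p i < n.
Proof. by move=> Hi; apply: leq_ltn_trans (lam_le p (leq0n i)) (pv_lt p _); lia. Qed.

Lemma lam_last p : 0 < n -> lam p n.-1 = 0.
Proof.
move=> Hn; apply/eqP; rewrite -leqn0.
have Hk : pv p^-1 0 <= n.-1 by have := pv_lt p^-1 Hn; lia.
by have := lam_le p Hk; rewrite pvKV.
Qed.

Lemma lam_bound p i : i < n -> lam p i + i < n.
Proof.
move=> Hi.
have U : uniq (map (pv p) (iota 0 i.+1)).
  rewrite map_inj_in_uniq ?iota_uniq // => a b; rewrite !mem_iota => Ha Hb.
  by apply: pv_inj; lia.
have Sub : {subset map (pv p) (iota 0 i.+1) <= iota (lam p i) (n - lam p i)}.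
  move=> v /mapP [k]; rewrite mem_iota => Hk ->; rewrite mem_iota lam_le; last lia.
  have := pv_lt p (k:=k); have := lam_lt p Hi; lia.
have := uniq_leq_size U Sub; rewrite size_map !size_iota; have := lam_lt p Hi; lia.
Qed.

Lemma rank0P p i j : (inD p i j /\ rank p i j = 0) <-> (i < n /\ j < lam p i).
Proof.
split.
  case; rewrite inDE => /and4P [Hi Hj H1 H2]; rewrite rankE ?(ltnW Hi) // => /eqP.
  rewrite -leqn0 leqNgt -has_count => /hasP Hn; split => //; apply/lamP => k.
  rewrite leq_eqVlt => /orP [/eqP -> //|Hk].
  rewrite ltn_neqAle; apply/andP; split.
    by apply/eqP => E; have := pvK p (ltn_trans Hk Hi); rewrite -E; lia.
  by rewrite leqNgt; apply/negP => Hc; apply: Hn; exists k => //; rewrite mem_iota.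
case=> Hi /lamP H.
have Hj : j < n.
  have := H 0 (leq0n _); have : 0 < n by lia.
  by move=> H0; have := pv_lt p H0; lia.
split.
  rewrite inDE Hi Hj H //=; rewrite ltnNge; apply/negP => Hc.
  by have := H _ Hc; rewrite pvKV // ltnn.
rewrite rankE ?(ltnW Hi) //; apply/eqP; rewrite -leqn0 leqNgt -has_count.
apply/hasP => [[k]]; rewrite mem_iota => /andP [_ Hk]; have := H k; lia.
Qed.


Lemma inD_dom p : avoids p [::0;2;1] -> forall i j, inD p i j = (i < n) && (j < lam p i).
Proof.
move=> A i j; apply/idP/idP.
  by move=> H; have /rank0P [-> ->] : inD p i j /\ rank p i j = 0 by split => //; apply: dominant0.
by move=> /andP [H1 H2]; have [] := proj2 (rank0P p i j) (conj H1 H2).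
Qed.

Lemma ess_dom p : avoids p [::0;2;1] -> forall i j,
  ess p i j = [&& i.+1 < n, lam p i.+1 < lam p i & j.+1 == lam p i].
Proof.
move=> A i j; rewrite /ess !inD_dom //.
have M := lam_mono p (leqnSn i).
case: (ltnP i.+1 n) => Hin.
  apply/idP/idP; lia.
case: (ltnP i n) => Hi; last first.
  by [].
have L : lam p i = 0.
  have E : i = n.-1 by lia.
  by rewrite E lam_last //; lia.
rewrite L /=; lia.
Qed.


Lemma rank_bound p i j : inD p i j -> i + j + 2 <= n + rank p i j.
Proof.
move=> HD; have R := RR_rank HD.
move: (HD); rewrite inDE => /and4P [Hi Hj H1 H2].
pose s := [seq pv p k | k <- iota 0 i.+1 & j < pv p k].
have U : uniq s.
  rewrite map_inj_in_uniq ?filter_uniq ?iota_uniq // => a b.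
  rewrite !mem_filter !mem_iota => /andP [_ Ha] /andP [_ Hb].
  by apply: pv_inj; lia.
have Sub : {subset s <= iota j.+1 (n - j.+1)}.
  move=> v /mapP [k]; rewrite mem_filter mem_iota => /andP [Hk Hk'] ->.
  rewrite mem_iota Hk /=; have := pv_lt p (k:=k); lia.
have := uniq_leq_size U Sub; rewrite size_map size_filter size_iota.
have C := count_predC (fun k => j < pv p k) (iota 0 i.+1).
have E : count (predC (fun k => j < pv p k)) (iota 0 i.+1) = RR p i j.
  by apply: eq_count => k /=; rewrite -leqNgt.
rewrite E R size_iota in C; lia.
Qed.

Section Inj.
Variable sg : {perm 'I_n}.

Definition Fn p i j := [&& ess sg i j, ess p i.+1 j.+1 & rank p i.+1 j.+1 == 1].

Lemma ess_inD p i j : ess p i j -> inD p i j.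
Proof. by case/and3P. Qed.

Lemma rank1_pos p i j : rank p i j = 1 -> i <= n -> 0 < i /\ 0 < j.
Proof.
move=> R Hi; move: R; rewrite rankE //.
case: i Hi => [|i] Hi R; first by [].
split => //.
have : 0 < count (fun k => pv p k < j) (iota 0 i.+1) by rewrite R.
by rewrite -has_count => /hasP [k _]; lia.
Qed.

Lemma rank0_next p i j : inD p i j -> rank p i j = 0 -> rank p i.+1 j.+1 = 0.
Proof.
move=> HD R0; have [Hi /lamP Hl] := proj1 (rank0P p i j) (conj HD R0).
rewrite rankE //; apply/eqP; rewrite -leqn0 leqNgt -has_count.
apply/hasP => [[k]]; rewrite mem_iota => /andP [_ Hk]; have := Hl k; lia.
Qed.

Variables (pi : {perm 'I_n}) (Sp : schroder pi) (Ph : phi_rel pi sg).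

Lemma rank_ess_le1 i j : ess pi i j -> rank pi i j <= 1.
Proof. by move=> H; apply: (proj1 (schroderP pi) Sp); apply: ess_inD. Qed.

Lemma essA i j : ess pi i j =
  (ess sg i j && ~~ Fn pi i j) || [&& 0 < i, 0 < j & Fn pi i.-1 j.-1].
Proof.
have Ephi := proj1 Ph.
apply/idP/idP.
  move=> E; have HD := ess_inD E; have Hi : i <= n by move: HD; rewrite inDE; lia.
  have := rank_ess_le1 E; rewrite leq_eqVlt ltnS leqn0 => /orP [/eqP R1|/eqP R0].
    have [Pi Pj] := rank1_pos R1 Hi.
    apply/orP; right; rewrite Pi Pj /Fn Ephi /ess_star !prednK // E R1 eqxx.
    by rewrite orbT.
  apply/orP; left; rewrite Ephi /ess_star E R0 /= /Fn.
  by rewrite (rank0_next HD R0) /= !andbF.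
case/orP.
  case/andP; rewrite Ephi /ess_star => /orP [/andP [-> _] //|/andP [E R]].
  by rewrite /Fn Ephi /ess_star E R orbT.
by case/and3P => Pi Pj /and3P [_]; rewrite !prednK.
Qed.

Lemma rankA i j : ess pi i j -> rank pi i j = [&& 0 < i, 0 < j & Fn pi i.-1 j.-1].
Proof.
move=> E; have HD := ess_inD E; have Hi : i <= n by move: HD; rewrite inDE; lia.
have := rank_ess_le1 E; rewrite leq_eqVlt ltnS leqn0 => /orP [/eqP R1|/eqP R0].
  move: (E); rewrite essA => /orP [/andP [_ _]|/and3P [-> -> ->] //].
  have [Pi Pj] := rank1_pos R1 Hi.
  by rewrite R1 Pi Pj /Fn !prednK // E R1 /= andbT Ph.1 /ess_star !prednK // E R1 orbT.
rewrite R0; case Pi: (0 < i); case Pj: (0 < j) => //=.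
case F: (Fn pi i.-1 j.-1) => //.
by move/and3P: F => [_ _ /eqP]; rewrite !prednK // R0.
Qed.

End Inj.

Lemma injA sg p1 p2 : schroder p1 -> phi_rel p1 sg -> schroder p2 -> phi_rel p2 sg ->
  (forall i j, Fn sg p1 i j = Fn sg p2 i j) -> p1 = p2.
Proof.
move=> S1 P1 S2 P2 EF; apply: fulton => i j.
  by rewrite (essA S1 P1) (essA S2 P2) !EF.
move=> E; have E2 : ess p2 i j by rewrite (essA S2 P2) -!EF -(essA S1 P1).
by rewrite (rankA S1 P1 E) (rankA S2 P2 E2) !EF.
Qed.

Definition Fset (sg : {perm 'I_n}) p : {set 'I_n * 'I_n} := [set x : 'I_n * 'I_n | Fn sg p x.1 x.2].

Definition Inner (sg : {perm 'I_n}) : {set 'I_n * 'I_n} :=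
  [set x : 'I_n * 'I_n | ess sg x.1 x.2 && (x.1.+1 + x.2.+1 < n)].

Lemma Fset_eq sg p1 p2 : Fset sg p1 = Fset sg p2 -> forall i j, Fn sg p1 i j = Fn sg p2 i j.
Proof.
move=> E i j.
case: (ltnP i n) => Hi; last first.
  by rewrite /Fn /ess !inDE (_ : (i < n) = false) //; lia.
case: (ltnP j n) => Hj; last first.
  by rewrite /Fn /ess !inDE (_ : (j < n) = false) ?andbF //; lia.
have : ((Ordinal Hi, Ordinal Hj) \in Fset sg p1) = ((Ordinal Hi, Ordinal Hj) \in Fset sg p2).
  by rewrite E.
by rewrite !inE.
Qed.

Lemma Fset_sub sg p : Fset sg p \subset Inner sg.
Proof.
apply/subsetP => x; rewrite !inE => /and3P [E1 E2 /eqP R].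
rewrite E1 /=; have := rank_bound (ess_inD E2); rewrite R; lia.
Qed.


Section MaxR.
Variables (F : nat -> nat) (P : pred nat).
Definition Mx i := \max_(i <= a < n | P a) F a.

Lemma Mx_step i : i < n -> Mx i = maxn (if P i then F i else 0) (Mx i.+1).
Proof. by move=> H; rewrite /Mx big_ltn_cond //; case: (P i) => //; rewrite max0n. Qed.

Lemma Mx_ge i : n <= i -> Mx i = 0.
Proof. by move=> H; rewrite /Mx big_geq. Qed.

Lemma Mx_le i c : (forall a, i <= a -> a < n -> P a -> F a <= c) -> Mx i <= c.
Proof.
have [d Hd] : exists d, n - i = d by eexists.
elim: d i Hd => [|d IH] i Hd H.
  by rewrite Mx_ge //; lia.
rewrite Mx_step; last lia.
rewrite geq_max; apply/andP; split.
  by case Pi: (P i) => //; apply: H => //; lia.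
apply: IH; first lia.
by move=> a Ha Hb; apply: H => //; lia.
Qed.

Lemma Mx_mono i i' : i <= i' -> Mx i' <= Mx i.
Proof.
move=> H; elim: i' H => [|i' IH] H; first by have -> : i = 0 by lia.
case: (ltnP i i'.+1) => H'; last by have -> : i = i'.+1 by lia.
apply: (@leq_trans (Mx i')); last by apply: IH; lia.
case: (ltnP i' n) => Hn; first by rewrite (Mx_step Hn) leq_maxr.
by rewrite (@Mx_ge i'.+1) //; lia.
Qed.

Lemma leq_Mx i a : i <= a -> a < n -> P a -> F a <= Mx i.
Proof.
move=> H1 H2 Pa; apply: leq_trans (Mx_mono H1).
by rewrite (Mx_step H2) Pa leq_maxl.
Qed.

Lemma Mx_ex i : Mx i = 0 \/ exists a, [/\ i <= a, a < n, P a & Mx i = F a].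
Proof.
have [d Hd] : exists d, n - i = d by eexists.
elim: d i Hd => [|d IH] i Hd.
  by left; rewrite Mx_ge //; lia.
rewrite Mx_step; last lia.
have Hd' : n - i.+1 = d by lia.
case Pi: (P i); last first.
  rewrite max0n; case: (IH _ Hd') => [->|[a [H1 H2 H3 H4]]]; first by left.
  by right; exists a; split => //; lia.
case: (leqP (Mx i.+1) (F i)) => H.
  by right; exists i; split => //; lia.
case: (IH _ Hd') => [E|[a [H1 H2 H3 H4]]]; first by rewrite E in H.
by right; exists a; split => //; lia.
Qed.

End MaxR.

End Basic.

Section Cons.
Variable n : nat.
Variables (sg : {perm 'I_n}) (Hsg : avoids sg [::0;2;1]) (P : {set 'I_n * 'I_n})
  (HP : P \subset Inner sg).

Local Notation lm := (lam sg).
Definition Kr a := (a.+1 < n) && (lm a.+1 < lm a).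
Definition Sr a := [exists x : 'I_n * 'I_n, (x \in P) && (nat_of_ord x.1 == a)].
Definition Ur a := Kr a && ~~ Sr a.
Definition mu i := Mx n lm Ur i.
Definition rho i := Mx n lm Sr i.-1.
Definition th i := maxn (mu i) (rho i).
Definition Rr i := (i == 0) || Ur i.-1.
Definition tt i := if Rr i then mu i else (th i).+1.

Lemma Sr_inner a : Sr a -> Kr a /\ a + lm a + 1 < n.
Proof.
case/existsP => x /andP [Hx /eqP Ea].
have := subsetP HP x Hx; rewrite inE => /andP [E B].
rewrite (ess_dom Hsg) in E; case/and3P: E => H1 H2 /eqP H3.
subst a; split; [by rewrite /Kr H1 H2|]. lia.
Qed.

Lemma lm_mono a b : a <= b -> lm b <= lm a.
Proof. exact: lam_mono. Qed.

Lemma mu_le_lm i : mu i <= lm i.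
Proof. by apply: Mx_le => a Ha _ _; apply: lm_mono. Qed.

Lemma rhoS_le i : rho i.+1 <= lm i.
Proof. by apply: Mx_le => a Ha _ _; apply: lm_mono. Qed.

Lemma th_bound i : i < n -> th i + i < n.
Proof.
move=> Hi; have := lam_bound sg Hi; have := mu_le_lm i.
have : rho i <= n - i.-1 - 2.
  apply: Mx_le => a Ha Han Sa; have [_ B] := Sr_inner Sa; lia.
rewrite /th; lia.
Qed.

Lemma mu_mono i i' : i <= i' -> mu i' <= mu i.
Proof. exact: Mx_mono. Qed.

Lemma rho_mono i i' : i <= i' -> rho i' <= rho i.
Proof. by move=> H; apply: Mx_mono; lia. Qed.

Lemma th_mono i i' : i <= i' -> th i' <= th i.
Proof. by move=> H; have := mu_mono H; have := rho_mono H; rewrite /th; lia. Qed.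

Lemma mu_Ur i : Ur i -> mu i = lm i /\ mu i.+1 < mu i.
Proof.
case/andP => /andP [H1 H2] H3.
have E : mu i = maxn (lm i) (mu i.+1).
  by rewrite /mu (Mx_step _ _ (ltnW H1)) /Ur /Kr H1 H2 H3.
have := mu_le_lm i.+1; rewrite E; lia.
Qed.

Lemma mu_nUr i : ~~ Ur i -> mu i.+1 = mu i.
Proof.
move=> H; case: (ltnP i n) => Hi.
  by rewrite /mu (Mx_step _ _ Hi) (negbTE H) max0n.
by rewrite /mu !Mx_ge //; lia.
Qed.

Lemma rho_Sr i : 0 < i -> Sr i.-1 -> [/\ rho i = lm i.-1, rho i.+1 < rho i & lm i < lm i.-1].
Proof.
move=> Hi S; have [/andP [H1 H2] _] := Sr_inner S.
rewrite prednK // in H1 H2.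
have E : rho i = maxn (lm i.-1) (rho i.+1).
  have Hl : i.-1 < n by lia.
  by rewrite /rho (Mx_step _ _ Hl) S prednK.
have := rhoS_le i; rewrite E; split => //; lia.
Qed.

Lemma rho_nSr i : (i == 0) || ~~ Sr i.-1 -> rho i.+1 = rho i.
Proof.
case: i => [|i] //= H.
case: (ltnP i n) => Hi.
  by rewrite /rho /= (Mx_step _ _ Hi) (negbTE H) max0n.
by rewrite /rho !Mx_ge //; lia.
Qed.

Lemma Rr_T2 i k : Rr i -> k < i -> mu i < mu k.
Proof.
case: i => [|i] // U Hk; rewrite /Rr /= in U.
have [_ H] := mu_Ur U; have Hk' : k <= i by lia.
have := mu_mono Hk'; lia.
Qed.

Lemma key_T3 i k : k < i -> mu k != mu i -> th i < mu k.
Proof.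
move=> Hk Hne.
have Hm := mu_mono (ltnW Hk).
case: (Mx_ex n lm Ur k) => [E|[a [H1 H2 /andP [/andP [K1 K2] Sa] E]]].
  by rewrite /mu E in Hm Hne; move: Hne; rewrite /mu E; lia.
rewrite -/(mu k) in E.
case: (leqP i a) => Hia.
  have := leq_Mx (P:=Ur) lm Hia H2; rewrite /Ur /Kr K1 K2 Sa => /(_ isT).
  by rewrite -/(mu i) => L; move: Hne; rewrite E; lia.
have L1 : mu i <= lm a.+1 by apply: leq_trans (mu_le_lm i) (lm_mono Hia).
have L2 : rho i <= lm a.+1.
  apply: Mx_le => s Hs Hsn Ss; apply: lm_mono.
  case: (ltngtP s a) => // Hsa; first lia.
  by move: Ss; rewrite Hsa (negbTE Sa).
rewrite /th E; lia.
Qed.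

Lemma T4 i : exists k, [/\ k <= i, Rr k & mu k = mu i].
Proof.
elim: i => [|i [k [H1 H2 H3]]]; first by exists 0.
case U: (Ur i); first by exists i.+1; split => //; rewrite /Rr /= U.
by exists k; split => //; [lia|rewrite mu_nUr ?U].
Qed.


Definition notinP (s : seq nat) : pred nat := fun v => v \notin s.
Definition pick (s : seq nat) (t : nat) := t + find (notinP s) (iota t (n - t)).

Fixpoint qs k := if k is k'.+1 then rcons (qs k') (pick (qs k') (tt k')) else [::].

Definition qf i := pick (qs i) (tt i).

Lemma qsE k : qs k = map qf (iota 0 k).
Proof.
elim: k => [|k IH] //.
change (rcons (qs k) (qf k) = map qf (iota 0 k.+1)).
by rewrite -addn1 iotaD map_cat IH cats1.
Qed.

Lemma size_qs k : size (qs k) = k.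
Proof. by rewrite qsE size_map size_iota. Qed.

Lemma mem_qs w k : reflect (exists2 i, i < k & qf i = w) (w \in qs k).
Proof.
rewrite qsE; apply: (iffP mapP) => [[i]|[i Hi <-]].
  by rewrite mem_iota => /andP [_ Hi] ->; exists i.
by exists i => //; rewrite mem_iota.
Qed.

Lemma pickP s t v : t <= v -> v < n -> v \notin s ->
  [/\ t <= pick s t, pick s t < n, pick s t \notin s &
      forall w, t <= w -> w < pick s t -> w \in s].
Proof.
move=> H1 H2 H3.
have Hh : has (notinP s) (iota t (n - t)).
  by apply/hasP; exists v => //; rewrite mem_iota; lia.
have Hf := Hh; rewrite has_find size_iota in Hf.
have N := nth_find 0 Hh; rewrite nth_iota // in N.
rewrite /pick; split; [lia|lia|exact: N|].
move=> w Hw1 Hw2.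
have Hl : w - t < find (notinP s) (iota t (n - t)) by lia.
have := @before_find _ 0 (notinP s) (iota t (n - t)) (w - t) Hl.
by rewrite nth_iota; [rewrite subnKC // /notinP => /negbFE|lia].
Qed.

Definition good i := [/\ tt i <= qf i, qf i < n, qf i \notin qs i,
  (forall w, tt i <= w -> w < qf i -> w \in qs i) & (Rr i -> qf i = mu i)].

Lemma goodP i : i < n -> good i.
Proof.
elim/ltn_ind: i => i IH Hi.
have F1 : forall k, k < i -> (th i < qf k) \/ (Rr k /\ qf k = mu k).
  move=> k Hk; have [G1 _ _ _ G5] := IH k Hk (ltn_trans Hk Hi).
  case R: (Rr k); first by right; split => //; apply: G5.
  left; move: G1; rewrite /tt R; have := th_mono (ltnW Hk); lia.
case R: (Rr i).
  have Hm : mu i < n by apply: leq_ltn_trans (mu_le_lm i) (lam_lt _ Hi).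
  have Nm : mu i \notin qs i.
    apply/negP => /mem_qs [k Hk E].
    case: (F1 k Hk) => [|[Rk Ek]]; first by rewrite /th; lia.
    by have := Rr_T2 R Hk; rewrite -Ek E ltnn.
  have [P1 P2 P3 P4] := pickP (t := mu i) (leqnn _) Hm Nm.
  rewrite /good /qf /tt R; split => // _.
  apply/eqP; rewrite eqn_leq P1 andbT leqNgt; apply/negP => L.
  by have := P4 _ (leqnn _) L; rewrite (negbTE Nm).
have [v [Hv1 Hv2 Hv3]] : exists v, [/\ (th i).+1 <= v, v < n & v \notin qs i].
  set L := iota (th i).+1 (n - (th i).+1).
  case A: (all (fun v => v \in qs i) L); last first.
    move/negbT: A; rewrite -has_predC => /hasP [v]; rewrite mem_iota => Hv Hv'.
    by exists v; split => //; lia.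
  exfalso.
  have [k [Hk Rk Ek]] := T4 i.
  have Hki : k < i by move: Hk; rewrite leq_eqVlt => /orP [/eqP E|//]; rewrite E R in Rk.
  have [_ _ _ _ G5] := IH k Hki (ltn_trans Hki Hi).
  have U : uniq (mu i :: L).
    rewrite /= iota_uniq andbT mem_iota; rewrite /th; lia.
  have Sub : {subset mu i :: L <= qs i}.
    move=> w; rewrite inE => /orP [/eqP ->|Hw]; last by move/allP: A; apply.
    by apply/mem_qs; exists k => //; rewrite G5 // Ek.
  have := uniq_leq_size U Sub; rewrite /= size_iota size_qs.
  have := th_bound Hi; lia.
have [P1 P2 P3 P4] := pickP Hv1 Hv2 Hv3.
by rewrite /good /qf /tt R; split.
Qed.

Lemma qf_lt i : i < n -> qf i < n.
Proof. by case/goodP. Qed.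

Lemma qf_inj i j : i < n -> j < n -> qf i = qf j -> i = j.
Proof.
move=> Hi Hj E; case: (ltngtP i j) => // H.
  by have [_ _ /negP N _ _] := goodP Hj; case: N; apply/mem_qs; exists i.
by have [_ _ /negP N _ _] := goodP Hi; case: N; apply/mem_qs; exists j.
Qed.

Lemma uniq_qs k : k <= n -> uniq (qs k).
Proof.
elim: k => [|k IH] Hk //=.
by rewrite rcons_uniq IH ?andbT; [case: (goodP Hk)|lia].
Qed.

Definition Qf (o : 'I_n) : 'I_n := Ordinal (qf_lt (ltn_ord o)).

Lemma Qf_inj : injective Qf.
Proof.
move=> a b /(congr1 val) /= E; apply: val_inj.
exact: qf_inj (ltn_ord a) (ltn_ord b) E.
Qed.

Definition Q : {perm 'I_n} := perm Qf_inj.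

Lemma pvQ k : k < n -> pv Q k = qf k.
Proof. by move=> Hk; rewrite (pvS Q Hk) permE. Qed.

Lemma usedV i v : i < n -> v <= th i -> (v \in qs i) = (v == mu i) && ~~ Rr i.
Proof.
move=> Hi Hv; apply/idP/idP.
  move/mem_qs => [k Hk E].
  have [G1 _ _ _ G5] := goodP (ltn_trans Hk Hi).
  case Rk: (Rr k); last first.
    by move: G1; rewrite /tt Rk; have := th_mono (ltnW Hk); lia.
  have Ek := G5 Rk.
  case: (eqVneq (mu k) (mu i)) => Em.
    rewrite -E Ek Em eqxx /=; apply/negP => Ri.
    by have := Rr_T2 Ri Hk; rewrite Em ltnn.
  by have := key_T3 Hk Em; lia.
case/andP => /eqP -> Ri.
have [k [Hk Rk Ek]] := T4 i.
have Hki : k < i by move: Hk; rewrite leq_eqVlt => /orP [/eqP E|//]; rewrite E (negbTE Ri) in Rk.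
have [_ _ _ _ G5] := goodP (ltn_trans Hki Hi).
by apply/mem_qs; exists k => //; rewrite G5 // Ek.
Qed.

Lemma tt_le i : tt i <= (th i).+1.
Proof. by rewrite /tt; case: (Rr i) => //; rewrite /th; lia. Qed.

Lemma inv_lt i j : i < n -> j < n -> (i < pv Q^-1 j) = (j \notin qs i.+1).
Proof.
move=> Hi Hj; set k := pv Q^-1 j.
have Hk : k < n by apply: pv_lt.
have Ek : qf k = j by rewrite -pvQ // pvKV.
apply/idP/idP.
  move=> H; apply/negP => /mem_qs [k' Hk' E].
  have Hk'n : k' < n by lia.
  have := qf_inj Hk'n Hk; rewrite E Ek => /(_ erefl); lia.
move=> H; rewrite ltnNge; apply/negP => L; move/negP: H; apply.
by apply/mem_qs; exists k.
Qed.

Lemma inDQ i j : inD Q i j = (i < n) && (j < tt i) && ~~ ((j == mu i) && ~~ Rr i).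
Proof.
rewrite inDE; case: (ltnP i n) => Hi //=.
have [G1 G2 G3 G4 _] := goodP Hi.
case: (ltnP j n) => Hj /=; last first.
  by apply/esym/negbTE; rewrite negb_and; apply/orP; left; have := tt_le i; lia.
rewrite pvQ // inv_lt // /= mem_rcons inE negb_or.
have E : forall v, v < tt i -> (v \in qs i) = (v == mu i) && ~~ Rr i.
  by move=> v Hv; apply: usedV => //; have := tt_le i; lia.
case: (ltnP j (tt i)) => Hjt.
  rewrite -E // (_ : j < qf i) ?andTb; last lia.
  by rewrite (_ : j != qf i) ?andbT //; apply/eqP; lia.
rewrite /=; case: (ltnP j (qf i)) => Hjq //=.
by rewrite G4 // andbF.
Qed.

Lemma rankQ i j : i < n -> j <= (th i).+1 -> rank Q i j = (mu i < j) && ~~ Rr i.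
Proof.
move=> Hi Hj; rewrite rankE ?(ltnW Hi) //.
rewrite (@eq_in_count _ _ (fun k => qf k < j)); last first.
  by move=> k; rewrite mem_iota => /andP [_ Hk]; rewrite /= pvQ //; lia.
rewrite -(count_map qf (fun v => v < j)) -qsE.
rewrite (@eq_in_count _ _ (fun v => (v == mu i) && ((mu i < j) && ~~ Rr i))); last first.
  move=> v Hv /=; case: (ltnP v j) => Hvj.
    move: Hv; rewrite usedV //; last lia.
    by case/andP => /eqP Ev Ri; subst v; rewrite eqxx Hvj Ri.
  by case: eqP => // E; rewrite -E ltnNge Hvj.
case C: ((mu i < j) && ~~ Rr i).
  rewrite (@eq_count _ _ (pred1 (mu i))); last by move=> v; rewrite andbT.
  rewrite count_uniq_mem ?uniq_qs ?(ltnW Hi) //.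
  by rewrite usedV // ?eqxx; [case/andP: C => _ ->|rewrite /th; lia].
by rewrite (@eq_count _ _ pred0) ?count_pred0 // => v; rewrite andbF.
Qed.


Lemma inD_last (p : {perm 'I_n}) i j : inD p i j -> i.+1 < n.
Proof. by rewrite inDE => /and4P [_ Hj _ H]; have := pv_lt p^-1 Hj; lia. Qed.

Lemma EssQ i j :
  (ess Q i j && (rank Q i j == 0)) = Ur i && (j.+1 == lm i) /\
  (ess Q i j && (rank Q i j == 1)) = [&& 0 < i, Sr i.-1 & j == lm i.-1].
Proof.
have f1 : Ur i -> mu i = lm i /\ mu i.+1 < mu i /\ i.+1 < n.
  by move=> U; have [A B] := mu_Ur U; do 2!split => //; case/andP: U => /andP [].
have f2 : ~~ Ur i -> mu i.+1 = mu i by apply: mu_nUr.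
have f3 : 0 < i -> Sr i.-1 -> rho i = lm i.-1 /\ rho i.+1 < rho i /\ lm i < lm i.-1 /\ i.+1 < n.
  move=> Hi S; have [A B C] := rho_Sr Hi S; do 3!split => //.
  by have [_ B2] := Sr_inner S; lia.
have f4 : (i == 0) || ~~ Sr i.-1 -> rho i.+1 = rho i by apply: rho_nSr.
have f5 := rhoS_le i.
have f5' := mu_le_lm i.
have f6 : 0 < i -> Sr i.-1 -> ~~ Ur i.-1 by move=> _ S; rewrite /Ur S andbF.
have f7 := @inD_last Q i j.
have f8 : inD Q i j -> rank Q i j = (mu i < j) && ~~ Rr i.
  move=> HD; have := f7 HD => Hn; apply: rankQ; first lia.
  by move: HD; rewrite inDQ => /andP [/andP [_ H] _]; have := tt_le i; lia.
have RS : Rr i.+1 = Ur i by [].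
move: f1 f2 f3 f4 f6 f7 f8; rewrite /ess !inDQ /tt RS /Rr /th.
case I0: (i == 0); case: (Ur i); case: (Sr i.-1); case: (Ur i.-1);
  move=> /= f1 f2 f3 f4 f6 f7 f8; split; lia.
Qed.


Lemma schroderQ : schroder Q.
Proof.
apply/schroderP => i j HD.
have Hi : i < n by move: HD; rewrite inDQ => /andP [/andP []].
have Hj : j < tt i by move: HD; rewrite inDQ => /andP [/andP []].
rewrite rankQ //; first by case: (_ && _).
by have := tt_le i; lia.
Qed.

Lemma phiQ : phi_rel Q sg.
Proof.
split; last by move=> i j E; apply: dominant0 => //; case/and3P: E.
move=> i j; rewrite /ess_star.
have R1 : forall i j, ess Q i j -> (rank Q i j != 1) = (rank Q i j == 0).
  move=> i' j' E; have := proj1 (schroderP Q) schroderQ i' j' (ess_inD E); lia.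
have -> : ess Q i j && (rank Q i j != 1) = ess Q i j && (rank Q i j == 0).
  by case E: (ess Q i j) => //; rewrite R1.
rewrite (proj1 (EssQ i j)) (proj2 (EssQ i.+1 j.+1)) (ess_dom Hsg).
have HS := @Sr_inner i; rewrite /Kr in HS.
rewrite /Ur /Kr (_ : (0 < i.+1) = true) // (_ : i.+1.-1 = i) //.
case: (Sr i) HS => HS; [have [/andP [K1 K2] _] := HS isT|]; lia.
Qed.

Lemma FsetQ : Fset sg Q = P.
Proof.
apply/setP => x; rewrite inE /Fn (proj2 (EssQ x.1.+1 x.2.+1)) /=.
apply/idP/idP.
  case/and3P => E /existsP [y /andP [Hy /eqP Ey]] /eqP Ex.
  have := subsetP HP y Hy; rewrite inE (ess_dom Hsg) => /andP [/and3P [_ _ /eqP E2] _].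
  rewrite Ey -Ex in E2.
  have -> : x = y.
    case: x y Ey E2 {E Ex Hy} => [x1 x2] [y1 y2] /= E1 E2.
    by congr pair; apply: val_inj => /=; lia.
  exact: Hy.
move=> Hx; have := subsetP HP x Hx; rewrite inE => /andP [E _].
rewrite E /=; apply/andP; split.
  by apply/existsP; exists x; rewrite Hx eqxx.
by move: E; rewrite (ess_dom Hsg) => /and3P [_ _ /eqP <-].
Qed.

End Cons.

Theorem proposition2p8 (n : nat) (sigma : {perm 'I_n}) :
  avoids sigma [:: 0; 2; 1] ->
  forall A : {set {perm 'I_n}},
    (forall pi : {perm 'I_n}, pi \in A <-> (schroder pi /\ phi_rel pi sigma)) ->
    #|A| =
    2 ^ #|[set x : 'I_n * 'I_n | ess sigma x.1 x.2 && (x.1.+1 + x.2.+1 < n)]|.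
Proof.
move=> Hs A HA.
change [set x : 'I_n * 'I_n | ess sigma x.1 x.2 && (x.1.+1 + x.2.+1 < n)] with (Inner sigma).
rewrite -card_powerset.
have inj : {in A &, injective (Fset sigma)}.
  move=> p1 p2 /HA [S1 P1] /HA [S2 P2] E.
  exact: injA S1 P1 S2 P2 (Fset_eq E).
rewrite -(card_in_imset inj).
suff -> : Fset sigma @: A = powerset (Inner sigma) by [].
apply/eqP; rewrite eqEsubset; apply/andP; split.
  apply/subsetP => X /imsetP [p _ ->]; rewrite powersetE; exact: Fset_sub.
apply/subsetP => X; rewrite powersetE => HX.
apply/imsetP; exists (Q Hs HX); last by rewrite FsetQ.
by apply/HA; split; [exact: schroderQ|exact: phiQ].
Qed.
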